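(* Let $m\ge2$ and let $\mathcal W\subseteq\mathcal S_m$ be such that the graph $\mathcal G(\mathcal W)$ is a tree. Let $\mathcal B=\mathcal S_m\setminus\mathcal W$. Then from every $B\in\mathcal B$ there is a path in $\mathcal G(\mathcal B)$ from $B$ to a border quadrilateral (which lies in $\mathcal B$).
   Context: Let $Q$ be a convex quadrilateral in $\mathbb{R}^2$. Divide $Q$ into two triangles by its shorter diagonal (either diagonal if they have equal length). Label the vertices $Q_1,Q_2,Q_3,Q_4$ anticlockwise, starting at an endpoint of that diagonal, so that the diagonal is $Q_1Q_3$. For an integer $m\ge2$, define the following index sets: - $A_1=\{(k_1,k_2,k_3,0)\in\mathbb{Z}_{\ge0}^4:k_1+k_2+k_3=m-1,\ k_2\ne0\}$, - $A_2=\{(k_1,0,k_3,k_4)\in\mathbb{Z}_{\ge0}^4:k_1+k_3+k_4=m-1,\ k_4\ne0\}$, - $A_3=\{(k_1,0,k_3,0)\in\mathbb{Z}_{\ge0}^4:k_1+k_3=m-1\}$, - $A=A_1\cup A_2\cup A_3$. For $k\in A$, let $S_m(k)$ be the quadrilateral with ordered vertices $R_1R_2R_3R_4$ given below. - If $k\in A_1$: $R_1=\frac{(k_1+1)Q_1+k_2Q_2+k_3Q_3}{m}$, $R_2=\frac{k_1Q_1+(k_2+1)Q_2+k_3Q_3}{m}$, $R_3=\frac{k_1Q_1+k_2Q_2+(k_3+1)Q_3}{m}$, $R_4=\frac{(k_1+1)Q_1+(k_2-1)Q_2+(k_3+1)Q_3}{m}$. - If $k\in A_2$: $R_1=\frac{(k_1+1)Q_1+k_3Q_3+k_4Q_4}{m}$,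 $R_2=\frac{(k_1+1)Q_1+(k_3+1)Q_3+(k_4-1)Q_4}{m}$, $R_3=\frac{k_1Q_1+(k_3+1)Q_3+k_4Q_4}{m}$, $R_4=\frac{k_1Q_1+k_3Q_3+(k_4+1)Q_4}{m}$. - If $k\in A_3$: $R_1=\frac{(k_1+1)Q_1+k_3Q_3}{m}$, $R_2=\frac{k_1Q_1+Q_2+k_3Q_3}{m}$, $R_3=\frac{k_1Q_1+(k_3+1)Q_3}{m}$, $R_4=\frac{k_1Q_1+k_3Q_3+Q_4}{m}$. Let $\mathcal S_m=\{S_m(k):k\in A\}$; these quadrilaterals tile $Q$. A border quadrilateral is an element of $\mathcal S_m$ having a side contained in the boundary of $Q$. For $\mathcal W\subseteq\mathcal S_m$, the graph $\mathcal G(\mathcal W)$ has vertex set $\mathcal W$, with two elements adjacent iff they have a common side. For $\mathcal B\subseteq\mathcal S_m$, the graph $\mathcal G(\mathcal B)$ has vertex set $\mathcal B$, with two elements adjacent iff they have a common side or a common vertex. *)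

(* Defs.v *)
From HB Require Import structures.
From mathcomp Require Import all_boot all_order all_algebra.
Set Implicit Arguments. Unset Strict Implicit. Unset Printing Implicit Defensive.
Import Order.TTheory GRing.Theory Num.Theory.
Local Open Scope ring_scope.

Section Quad.
Variable R : realFieldType.

Definition pt := (R * R)%type.
Definition padd (p q : pt) : pt := (p.1 + q.1, p.2 + q.2).
Definition pscale (a : R) (p : pt) : pt := (a * p.1, a * p.2).
Definition orient (p q r : pt) : R :=
  (q.1 - p.1) * (r.2 - p.2) - (q.2 - p.2) * (r.1 - p.1).
Definition sqdist (p q : pt) : R := (p.1 - q.1) ^+ 2 + (p.2 - q.2) ^+ 2.

Definition convex_ccw_quad (Q1 Q2 Q3 Q4 : pt) : Prop :=
  [/\ 0 < orient Q1 Q2 Q3, 0 < orient Q2 Q3 Q4, 0 < orient Q3 Q4 Q1 & 0 < orient Q4 Q1 Q2].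

Definition seg_pt (a b : pt) (t : R) : pt := padd (pscale (1 - t) a) (pscale t b).
Definition on_seg (p a b : pt) : Prop := exists t, 0 <= t <= 1 /\ p = seg_pt a b t.
Definition on_boundary (Q1 Q2 Q3 Q4 p : pt) : Prop :=
  [\/ on_seg p Q1 Q2, on_seg p Q2 Q3, on_seg p Q3 Q4 | on_seg p Q4 Q1].

Variables (Q1 Q2 Q3 Q4 : pt) (m : nat).

Definition idx := ('I_m * 'I_m * 'I_m * 'I_m)%type.
Definition k1 (k : idx) : nat := k.1.1.1.
Definition k2 (k : idx) : nat := k.1.1.2.
Definition k3 (k : idx) : nat := k.1.2.
Definition k4 (k : idx) : nat := k.2.

Definition inA1 (k : idx) : bool := [&& (k1 k + k2 k + k3 k == m.-1)%N, k2 k != 0%N & k4 k == 0%N].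
Definition inA2 (k : idx) : bool := [&& (k1 k + k3 k + k4 k == m.-1)%N, k2 k == 0%N & k4 k != 0%N].
Definition inA3 (k : idx) : bool := [&& (k1 k + k3 k == m.-1)%N, k2 k == 0%N & k4 k == 0%N].
Definition inA (k : idx) : bool := [|| inA1 k, inA2 k | inA3 k].

Definition comb (a b c d : nat) : pt :=
  pscale (m%:R)^-1 (padd (padd (pscale a%:R Q1) (pscale b%:R Q2))
                         (padd (pscale c%:R Q3) (pscale d%:R Q4))).

(* the i-th vertex R_{i+1} (i taken mod 4) of the quadrilateral S_m(k) *)
Definition vert (k : idx) (i : nat) : pt :=
  let a := k1 k in let b := k2 k in let c := k3 k in let d := k4 k in
  if inA1 k then
    match (i %% 4)%N with
    | 0 => comb a.+1 b c 0
    | 1 => comb a b.+1 c 0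
    | 2 => comb a b c.+1 0
    | _ => comb a.+1 b.-1 c.+1 0
    end
  else if inA2 k then
    match (i %% 4)%N with
    | 0 => comb a.+1 0 c d
    | 1 => comb a.+1 0 c.+1 d.-1
    | 2 => comb a 0 c.+1 d
    | _ => comb a 0 c d.+1
    end
  else (* A3 *)
    match (i %% 4)%N with
    | 0 => comb a.+1 0 c 0
    | 1 => comb a 1 c 0
    | 2 => comb a 0 c.+1 0
    | _ => comb a 0 c 1
    end.

Definition Sm : {set idx} := [set k | inA k].

Definition common_side (k l : idx) : bool :=
  [exists i : 'I_4, exists j : 'I_4,
     let a := vert k i in let b := vert k i.+1 in
     let c := vert l j in let d := vert l j.+1 in
     ((a == c) && (b == d)) || ((a == d) && (b == c))].

Definition common_vertex (k l : idx) : bool :=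
  [exists i : 'I_4, exists j : 'I_4, vert k i == vert l j].

Definition adjW (W : {set idx}) : rel idx :=
  fun k l => [&& k \in W, l \in W, k != l & common_side k l].

Definition adjB (B : {set idx}) : rel idx :=
  fun k l => [&& k \in B, l \in B, k != l & common_side k l || common_vertex k l].

Definition border (k : idx) : Prop :=
  exists i : 'I_4, forall t : R, 0 <= t <= 1 ->
    on_boundary Q1 Q2 Q3 Q4 (seg_pt (vert k i) (vert k i.+1) t).

End Quad.

Definition is_tree (T : finType) (V : {set T}) (e : rel T) : Prop :=
  [/\ V != set0,
      (forall x y, x \in V -> y \in V -> connect e x y)
    & (forall s : seq T, (3 <= size s)%N -> uniq s -> {subset s <= V} -> ~~ cycle e s)].

(* Main.v *)
Require Import Defs.
From HB Require Import structures.
From mathcomp Require Import all_boot all_order all_algebra.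
From mathcomp Require Import zify ring lra.
Import Order.TTheory GRing.Theory Num.Theory.
Set Implicit Arguments. Unset Strict Implicit. Unset Printing Implicit Defensive.

Section Local.
Local Open Scope nat_scope.
Definition near (a b : nat) := (a <= b.+1) && (b <= a.+1).
Definition cx c := nth 0 [:: 0;0;0;1;1;1;2;2;2] c.
Definition cy c := nth 0 [:: 0;1;2;0;1;2;0;1;2] c.
Definition nb (c d : nat) := [&& c != d, near (cx c) (cx d) & near (cy c) (cy d)].
Definition step (f : nat -> bool) (S : seq nat) :=
  S ++ [seq d <- iota 0 9 | ~~ f d && (d \notin S) && has (fun c => nb c d) S].
Definition lreach f p := iter 9 (step f) [:: p].
Fixpoint bits (n : nat) : seq (seq bool) :=
  if n is n'.+1 then [seq b :: s | b <- [:: true; false], s <- bits n'] else [:: [::]].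
Definition okf (f : nat -> bool) :=
  (f 4 && (count f [:: 1; 3; 5; 7] <= 1)) ==>
  all (fun p => ((p != 4) && ~~ f p) ==> let R := lreach f p in all (fun q => ((q != 4) && ~~ f q) ==> (q \in R)) (iota 0 9)) (iota 0 9).
Definition checkb := all (fun bs => okf (fun c => nth false bs c)) (bits 9).
Lemma check : checkb. Proof. vm_compute. reflexivity. Qed.

Lemma mem_bits n s : size s = n -> s \in bits n.
Proof.
elim: n s => [|n IH] [|b s] //= [Hs].
case: b; rewrite /= !mem_cat ?cats0 (map_f _ (IH _ Hs)) ?orbT //.
Qed.

Lemma cx_le c : cx c <= 2.
Proof. by do 10?case: c => [|c] //. Qed.
Lemma cy_le c : cy c <= 2.
Proof. by do 10?case: c => [|c] //. Qed.
Lemma cxy a b : a <= 2 -> b <= 2 -> cx (3*a+b) = a /\ cy (3*a+b) = b.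
Proof. by case: a => [|[|[|a]]] //; case: b => [|[|[|b]]]. Qed.
Lemma c_dec c : c < 9 -> c = 3 * cx c + cy c.
Proof. by do 10?case: c => [|c] //. Qed.

Lemma lreach_sound (T : finType) (E : rel T) (g : nat -> T) (f : nat -> bool) p :
  (forall c d, c < 9 -> d < 9 -> ~~ f c -> ~~ f d -> nb c d -> E (g c) (g d)) ->
  p < 9 -> ~~ f p -> forall k q, q \in iter k (step f) [:: p] ->
  [/\ q < 9, ~~ f q & connect E (g p) (g q)].
Proof.
move=> HE Hp Hfp; elim=> [|k IH] q /=.
  by rewrite inE => /eqP ->; split.
rewrite /step mem_cat => /orP [/IH //|].
rewrite mem_filter mem_iota /= => /andP [/andP [/andP [Hfq _] /hasP [c Hc Hcq]] Hq].
have [Hc9 Hfc Hconn] := IH _ Hc.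
split => //; apply: connect_trans Hconn (connect1 _).
exact: HE.
Qed.
End Local.

Definition adj8 {a} (p q : 'I_a * 'I_a) := [&& p != q, near p.1 q.1 & near p.2 q.2].
Definition adj4 {a} (p q : 'I_a * 'I_a) := adj8 p q && ((p.1 == q.1 :> nat) || (p.2 == q.2 :> nat)).

Lemma adj8C a (p q : 'I_a * 'I_a) : adj8 p q = adj8 q p.
Proof. rewrite /adj8 eq_sym /near; congr (_ && _); rewrite [X in X && _]andbC [X in _ && X]andbC //. Qed.
Lemma adj4C a (p q : 'I_a * 'I_a) : adj4 p q = adj4 q p.
Proof. by rewrite /adj4 adj8C (eq_sym (nat_of_ord p.1)) (eq_sym (nat_of_ord p.2)). Qed.
Lemma adj8_irr a (p : 'I_a * 'I_a) : adj8 p p = false.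
Proof. by rewrite /adj8 eqxx. Qed.

Lemma neq_pair a (p q : 'I_a * 'I_a) : (p.1 != q.1 :> nat) || (p.2 != q.2 :> nat) -> p != q.
Proof. by case/orP; apply: contraNneq => ->. Qed.

Section Grid.
Local Open Scope nat_scope.
Variable N : nat.
Definition G := ('I_N.+1 * 'I_N.+1)%type.
Definition inner (p : G) := [&& 0 < p.1, p.1 < N, 0 < p.2 & p.2 < N].
Definition off (l : G) c : G := (inord (l.1 + cx c - 1), inord (l.2 + cy c - 1)).

Lemma off_val1 l c : inner l -> (off l c).1 = l.1 + cx c - 1 :> nat.
Proof. move=> /and4P [? ? ? ?]; rewrite /off /= inordK //; have := cx_le c; lia. Qed.
Lemma off_val2 l c : inner l -> (off l c).2 = l.2 + cy c - 1 :> nat.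
Proof. move=> /and4P [? ? ? ?]; rewrite /off /= inordK //; have := cy_le c; lia. Qed.

Lemma pair_val (p q : G) : p.1 = q.1 :> nat -> p.2 = q.2 :> nat -> p = q.
Proof. by case: p q => [a b] [c d] /= /val_inj -> /val_inj ->. Qed.

Lemma adj_off l c d : inner l -> c < 9 -> d < 9 -> nb c d -> adj8 (off l c) (off l d).
Proof.
move=> Hl Hc Hd /and3P [cd n1 n2].
have := Hl => /and4P [? ? ? ?].
rewrite /adj8 /near !off_val1 // !off_val2 //.
move: n1 n2; rewrite /near => /andP [? ?] /andP [? ?].
have -> : off l c != off l d.
  apply: neq_pair; rewrite !off_val1 // !off_val2 //.
  move: cd; have := c_dec Hc; have := c_dec Hd.
  have := cx_le c; have := cx_le d; have := cy_le c; have := cy_le d; lia.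
have := cx_le c; have := cx_le d; have := cy_le c; have := cy_le d.
move=> *; apply/and3P; split => //; lia.
Qed.

Lemma off4 l : inner l -> off l 4 = l.
Proof. by move=> Hl; apply: pair_val; rewrite ?off_val1 ?off_val2 //= subn1 addn1. Qed.

Lemma off_inj l c d : inner l -> c < 9 -> d < 9 -> off l c = off l d -> c = d.
Proof.
move=> Hl Hc Hd E.
have E1 := congr1 (fun x : G => nat_of_ord x.1) E.
have E2 := congr1 (fun x : G => nat_of_ord x.2) E.
move: E1 E2 => /=; rewrite !off_val1 // !off_val2 //.
have := Hl => /and4P [? ? ? ?].
have := c_dec Hc; have := c_dec Hd; have := cx_le c; have := cx_le d; have := cy_le c; have := cy_le d.
lia.
Qed.

Lemma adj_decomp l p : inner l -> adj8 p l -> exists2 c, c < 9 & c != 4 /\ p = off l c.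
Proof.
move=> Hl /and3P [pl /andP [h1 h2] /andP [h3 h4]].
have := Hl => /and4P [? ? ? ?].
have [ex ey] := @cxy (p.1 + 1 - l.1) (p.2 + 1 - l.2) ltac:(lia) ltac:(lia).
exists (3 * (p.1 + 1 - l.1) + (p.2 + 1 - l.2)); first lia.
have Hp : p = off l (3 * (p.1 + 1 - l.1) + (p.2 + 1 - l.2)).
  by apply: pair_val; rewrite ?off_val1 ?off_val2 // ?ex ?ey; lia.
split => //; apply/negP => /eqP E4.
by move: pl; rewrite Hp E4 off4 ?eqxx.
Qed.

Lemma orth_adj4 l c : inner l -> c \in [:: 1; 3; 5; 7] -> adj4 l (off l c).
Proof.
move=> Hl Hc; have := Hl => /and4P [? ? ? ?].
rewrite /adj4 /adj8 /near !off_val1 // !off_val2 //.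
have -> : l != off l c.
  apply: neq_pair; rewrite !off_val1 // !off_val2 //.
  by move: Hc; rewrite !inE => /or4P [] /eqP -> ; rewrite /cx /cy /=; lia.
by move: Hc; rewrite !inE => /or4P [] /eqP -> ; rewrite /cx /cy /=; lia.
Qed.


Definition EW (W : {set G}) : rel G := fun p q => [&& p \notin W, q \notin W & adj8 p q].
Definition e4 (W : {set G}) : rel G := fun p q => [&& p \in W, q \in W & adj4 p q].
Definition acyc (W : {set G}) := forall s, 2 < size s -> uniq s -> {subset s <= W} -> ~~ cycle (e4 W) s.
Definition reach (W : {set G}) x := exists2 c, ~~ inner c & connect (EW W) x c.

Lemma Klem (W : {set G}) (l p q : G) : (forall x, x \in W -> inner x) -> l \in W -> #|[set z | e4 W l z]| <= 1 ->
  p \notin W -> q \notin W -> adj8 p l -> adj8 q l -> connect (EW W) p q.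
Proof.
move=> HW lW Hdeg pW qW Hpl Hql.
have Hl := HW l lW.
have [cp cp9 [cp4 Ep]] := adj_decomp Hl Hpl.
have [cq cq9 [cq4 Eq]] := adj_decomp Hl Hql.
set F := nth false [seq off l c \in W | c <- iota 0 9].
have HF : forall c, c < 9 -> F c = (off l c \in W).
  by move=> c Hc; rewrite /F (nth_map 0) ?size_iota // nth_iota.
have hok : okf F.
  apply: (seq.allP check); apply: mem_bits; by rewrite size_map size_iota.
have pairx : forall c d, c \in [:: 1; 3; 5; 7] -> d \in [:: 1; 3; 5; 7] -> c != d -> F c -> F d -> False.
  move=> c d Hc Hd cd Fc Fd.
  have c9 : c < 9 by move: Hc; rewrite !inE => /or4P [] /eqP ->.
  have d9 : d < 9 by move: Hd; rewrite !inE => /or4P [] /eqP ->.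
  rewrite HF // in Fc; rewrite HF // in Fd.
  suff : 1 < #|[set z | e4 W l z]| by rewrite ltnNge Hdeg.
  apply/card_gt1P; exists (off l c), (off l d); split.
  - by rewrite inE /e4 lW Fc orth_adj4.
  - by rewrite inE /e4 lW Fd orth_adj4.
  - by apply: contra cd => /eqP /(off_inj Hl c9 d9) ->.
have pre : F 4 && (count F [:: 1; 3; 5; 7] <= 1).
  rewrite HF // off4 // lW /=.
  move: (pairx 1 3) (pairx 1 5) (pairx 1 7) (pairx 3 5) (pairx 3 7) (pairx 5 7).
  case: (F 1); case: (F 3); case: (F 5); case: (F 7) => //= H1 H2 H3 H4 H5 H6; exfalso;
    first [ by apply: H1 | by apply: H2 | by apply: H3 | by apply: H4 | by apply: H5 | by apply: H6 ].
move: hok; rewrite /okf pre implyTb => /seq.allP Hall.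
have Fp : F cp = false by rewrite HF // -Ep (negbTE pW).
have Fq : F cq = false by rewrite HF // -Eq (negbTE qW).
have := Hall cp; rewrite mem_iota cp9 cp4 Fp => /(_ isT) /implyP /(_ isT) /seq.allP Hall2.
have := Hall2 cq; rewrite mem_iota cq9 cq4 Fq => /(_ isT) /implyP /(_ isT) Hr.
have Hed : forall c d, c < 9 -> d < 9 -> ~~ F c -> ~~ F d -> nb c d -> EW W (off l c) (off l d).
  move=> c d c9 d9 Fc Fd ncd; rewrite /EW -!HF // Fc Fd /=; exact: adj_off.
have Fp' : ~~ F cp by rewrite Fp.
have [_ _ Hc] := lreach_sound Hed cp9 Fp' Hr.
by rewrite Ep Eq.
Qed.

Lemma base (x : G) : reach set0 x.
Proof.
exists (ord0, x.2) => //.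
suff H : forall i, i <= N -> connect (EW set0) (inord i, x.2) (ord0, x.2).
  by have := H x.1 (leq_ord _); rewrite inord_val -surjective_pairing.
elim=> [|i IH] Hi; first by rewrite (_ : inord 0 = ord0) // ; apply: val_inj; rewrite /= inordK.
apply: connect_trans (IH (ltnW Hi)); apply: connect1.
rewrite /EW !inE /adj8 /near /=.
rewrite !inordK //; last by apply: ltnW.
apply/andP; split; last by rewrite !leqnn /=; lia.
apply: neq_pair; rewrite /= !inordK //; [lia | by apply: ltnW].
Qed.
End Grid.
Section Leaf.
Variables (T : finType) (e : rel T) (W : {set T}).
Hypotheses (esym : symmetric e) (eirr : irreflexive e) (eW : forall x y, e x y -> x \in W).
Hypothesis acyc : forall s, 2 < size s -> uniq s -> {subset s <= W} -> ~~ cycle e s.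

Lemma path_in v p : path e v p -> {subset p <= W}.
Proof.
elim: p v => [|y p IH] v //= /andP [evy Hp] z; rewrite inE => /orP [/eqP ->|Hz].
  by apply: (eW (y:=v)); rewrite esym.
exact: (IH y Hp).
Qed.

Lemma ext v p : v \in W -> 1 < #|[set q | e v q]| -> uniq (v :: p) -> path e v p ->
  exists2 u, e u v & u \notin v :: p.
Proof.
move=> vW /card_gt1P [u1 [u2 [H1 H2 H12]]] Hu Hp.
rewrite !inE in H1 H2.
case: (boolP (u1 \in v :: p)) => [i1|]; last by exists u1; rewrite // esym.
case: (boolP (u2 \in v :: p)) => [i2|]; last by exists u2; rewrite // esym.
exfalso.
have nv1 : u1 != v by apply: contraTneq H1 => ->; rewrite eirr.
have nv2 : u2 != v by apply: contraTneq H2 => ->; rewrite eirr.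
rewrite inE (negPf nv1) /= in i1; rewrite inE (negPf nv2) /= in i2.
case: p Hu Hp i1 i2 => [|y p'] // Hu Hp i1 i2.
have [u [Hu1 Huy Hvu]] : exists u, [/\ u \in y :: p', u != y & e v u].
  case: (eqVneq u1 y) => [E1|]; last by exists u1.
  by exists u2; split => //; rewrite -E1 eq_sym.
set k := index u (y :: p').
have kpos : 0 < k by rewrite /k /= eq_sym (negPf Huy).
have ksz : k < size (y :: p') by rewrite index_mem.
set c := v :: take k.+1 (y :: p').
have := acyc (s := c).
have szc : 2 < size c.
  rewrite /c; change (2 < (size (take k.+1 (y :: p'))).+1).
  by rewrite size_takel // !ltnS.
have uc : uniq c.
  rewrite /c cons_uniq take_uniq; last by case/andP: Hu.
  case/andP: Hu => Hv _; rewrite andbT; apply: contra Hv; exact: mem_take.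
have sc : {subset c <= W}.
  move=> z; rewrite /c inE => /orP [/eqP -> //|]; move=> Hz; apply: (path_in Hp); exact: mem_take Hz.
move/(_ szc uc sc); apply/negP/negPn.
change (path e v (rcons (take k.+1 (y :: p')) v)); rewrite rcons_path.
have Hp2 := Hp; rewrite -(cat_take_drop k.+1 (y :: p')) cat_path in Hp2.
case/andP: Hp2 => Hp3 _; rewrite Hp3 /=.
rewrite (last_nth v) size_takel //; change (e (nth v (take k.+1 (y :: p')) k) v).
rewrite nth_take // nth_index //.
by rewrite esym.
Qed.

Lemma leaf : W != set0 -> exists2 l, l \in W & #|[set q | e l q]| <= 1.
Proof.
case/set0Pn => v0 Hv0.
case: (boolP [exists l in W, #|[set q | e l q]| <= 1]) => [/existsP [l /andP [? ?]]|H]; first by exists l.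
have Hdeg : forall l, l \in W -> 1 < #|[set q | e l q]|.
  move=> l Hl; move/existsPn: H => /(_ l); rewrite Hl /=; lia.
suff : forall d v p, #|T| - size (v :: p) = d -> v \in W -> uniq (v :: p) -> path e v p -> False.
  by move/(_ _ v0 [::] erefl Hv0 erefl erefl).
elim=> [|d IH] v p Hd Hv Hu Hp; have [u euv Hun] := ext Hv (Hdeg v Hv) Hu Hp.
  have : uniq (u :: v :: p) by rewrite cons_uniq Hun Hu.
  move/card_uniqP => Hs; have := max_card (mem (u :: v :: p)); rewrite Hs /=; move: Hd => /=; lia.
apply: (IH u (v :: p)) => /=.
- by move: Hd => /=; lia.
- exact: (eW euv).
- by rewrite -cons_uniq cons_uniq Hun Hu.
- by rewrite euv Hp.
Qed.
End Leaf.

Section Core.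
Local Open Scope nat_scope.
Variable N : nat.
Implicit Types (W : {set G N}) (x : G N).

Lemma transfer W l b : (forall x, x \in W -> inner x) -> l \in W -> #|[set z | e4 W l z]| <= 1 ->
  b \notin W -> reach (W :\ l) b -> reach W b.
Proof.
move=> HW lW Hdeg bW [c cin /connectP [s Hs Ec]].
have Hl := HW l lW.
suff : forall x, x \notin W :\ l -> path (EW (W :\ l)) x s -> ~~ inner (last x s) ->
    (x = l -> forall p, p \notin W -> adj8 p l -> reach W p) /\ (x != l -> reach W x).
  case/(_ b) => [||| _ ]; first by rewrite in_setD1 negb_and bW orbT.
  - exact: Hs.
  - by rewrite -Ec.
  apply; apply: contraNneq bW => ->; exact lW.
clear Hs Ec b bW.
elim: s => [|y s IH] x /= xW.
  move=> _ xin; split => [xl|xl]; first by move: xin; rewrite xl Hl.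
  exists x => //.
move=> /andP [/and3P [_ yW exy] Hp] Hlast.
have [Hy1 Hy2] := IH y yW Hp Hlast.
have xW' : x != l -> x \notin W by move=> xl; move: xW; rewrite in_setD1 xl.
have yW' : y != l -> y \notin W by move=> yl; move: yW; rewrite in_setD1 yl.
split.
  move=> xl p pW pl; subst x.
  have yl : y != l by apply: contraTneq exy => ->; rewrite adj8_irr.
  have [c' c'in Hc'] := Hy2 yl.
  exists c' => //; apply: connect_trans Hc'.
  apply: (Klem HW lW Hdeg pW (yW' yl) pl); by rewrite adj8C.
move=> xl; case: (eqVneq y l) => [yl|yl].
  by apply: (Hy1 yl x (xW' xl)); rewrite -yl.
have [c' c'in Hc'] := Hy2 yl; exists c' => //; apply: connect_trans Hc'.
by apply: connect1; rewrite /EW xW' // yW' // exy.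
Qed.

Lemma core n W : #|W| <= n -> (forall x, x \in W -> inner x) -> acyc W -> forall b, b \notin W -> reach W b.
Proof.
elim: n W => [|n IH] W Hn HW Hac b bW.
  move: Hn; rewrite leqn0 cards_eq0 => /eqP E; subst W; exact: base.
case: (eqVneq W set0) => [E|Wn0]; first by subst W; exact: base.
have hs1 : symmetric (e4 W) by move=> x y; rewrite /e4 adj4C andbCA.
have hs2 : irreflexive (e4 W) by move=> x; rewrite /e4 /adj4 adj8_irr !andbF.
have hs3 : forall x y, e4 W x y -> x \in W by move=> x y /andP [].
have [l lW Hdeg] := leaf hs1 hs2 hs3 Hac Wn0.
apply: (transfer HW lW Hdeg bW); apply: IH.
- by move: Hn; rewrite (cardsD1 l W) lW.
- by move=> x; rewrite in_setD1 => /andP [_ /HW].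
- move=> s s2 su ss; apply/negP => Hc.
  have ss' : {subset s <= W} by move=> z /ss; rewrite in_setD1 => /andP [].
  have := Hac s s2 su ss'; move=> /negP; apply; apply: sub_cycle Hc => x y; rewrite /e4 !in_setD1.
  by case/and3P => /andP [_ ->] /andP [_ ->] ->.
- by rewrite in_setD1 negb_and bW orbT.
Qed.

Definition EWin W : rel (G N) := fun p q => [&& inner p, inner q & EW W p q].

Lemma extract W b c : inner b -> b \notin W -> connect (EW W) b c -> ~~ inner c ->
  exists c', [/\ inner c', c' \notin W, (exists2 f, ~~ inner f & adj8 c' f) & connect (EWin W) b c'].
Proof.
move=> bin bW /connectP [s Hs ->]; elim: s b bin bW Hs => [|y s IH] b bin bW /=.
  by rewrite bin.
case/andP => /and3P [_ yW bye] Hp Hl.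
case: (boolP (inner y)) => yin.
  have [c' [c1 c2 c3 c4]] := IH y yin yW Hp Hl.
  exists c'; split => //; apply: connect_trans c4; apply: connect1.
  by rewrite /EWin bin yin /EW bW yW bye.
by exists b; split => //; exists y.
Qed.
End Core.

Section Trans.
Local Open Scope nat_scope.
Variable m' : nat.
Local Notation m := m'.+1.
Local Notation N := m'.+2.
Implicit Types (k : idx m) (p : G N).

Definition gx k := k2 k + k3 k.
Definition gy k := k3 k + k4 k.
Definition fromIdx k : G N := (inord (gx k).+1, inord (gy k).+1).
Definition toIdx p : idx m :=
  let x := p.1.-1 in let y := p.2.-1 in
  if y < x then (inord (m' - x), inord (x - y), inord y, inord 0)
  else if x < y then (inord (m' - y), inord 0, inord x, inord (y - x))
  else (inord (m' - x), inord 0, inord x, inord 0).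

Lemma Sm_facts k : k \in Sm m ->
  [/\ k1 k + k2 k + k3 k + k4 k = m', k2 k = 0 \/ k4 k = 0,
      inA1 k = (k2 k != 0) & inA2 k = (k4 k != 0)].
Proof.
rewrite inE /inA /inA1 /inA2 /inA3 /= => H; split; lia.
Qed.

Lemma inSm_of k : k1 k + k2 k + k3 k + k4 k = m' -> k2 k = 0 \/ k4 k = 0 -> k \in Sm m.
Proof. rewrite inE /inA /inA1 /inA2 /inA3 /= => *; lia. Qed.

Lemma idx_eq k l : k1 k = k1 l -> k2 k = k2 l -> k3 k = k3 l -> k4 k = k4 l -> k = l.
Proof.
case: k => [[[a b] c] d]; case: l => [[[a' b'] c'] d'].
by rewrite /k1 /k2 /k3 /k4 /= => /val_inj -> /val_inj -> /val_inj -> /val_inj ->.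
Qed.

Lemma k_lt k : [/\ k1 k < m, k2 k < m, k3 k < m & k4 k < m].
Proof. by case: k => [[[a b] c] d]; rewrite /k1 /k2 /k3 /k4 /=. Qed.

Lemma fromIdx_val k : k \in Sm m -> (fromIdx k).1 = (gx k).+1 :> nat /\ (fromIdx k).2 = (gy k).+1 :> nat.
Proof.
move=> /Sm_facts [s _ _ _]; rewrite /fromIdx /gx /gy /= !inordK //; lia.
Qed.

Lemma fromIdx_inner k : k \in Sm m -> inner (fromIdx k).
Proof.
move=> Hk; have [h1 h2] := fromIdx_val Hk; have [s _ _ _] := Sm_facts Hk.
rewrite /inner h1 h2 /gx /gy; lia.
Qed.

Lemma toIdx_facts p : inner p ->
  [/\ k2 (toIdx p) + k3 (toIdx p) = p.1.-1, k3 (toIdx p) + k4 (toIdx p) = p.2.-1,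
      k1 (toIdx p) + k2 (toIdx p) + k3 (toIdx p) + k4 (toIdx p) = m' &
      k2 (toIdx p) = 0 \/ k4 (toIdx p) = 0].
Proof.
rewrite /inner => /and4P [h1 h2 h3 h4].
rewrite /toIdx; case: ifP => c1; last case: ifP => c2;
  rewrite /k1 /k2 /k3 /k4 /= !inordK; try (split; lia); lia.
Qed.

Lemma toIdx_Sm p : inner p -> toIdx p \in Sm m.
Proof. by move=> /toIdx_facts [_ _ s d]; apply: inSm_of. Qed.

Lemma from_to p : inner p -> fromIdx (toIdx p) = p.
Proof.
move=> Hp; have [a b _ _] := toIdx_facts Hp; have Hs := toIdx_Sm Hp.
have [h1 h2] := fromIdx_val Hs; move: Hp; rewrite /inner => /and4P [? ? ? ?].
apply: pair_val; rewrite ?h1 ?h2 /gx /gy; lia.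
Qed.

Lemma to_from k : k \in Sm m -> toIdx (fromIdx k) = k.
Proof.
move=> Hk; have Hi := fromIdx_inner Hk; have [a b s d] := toIdx_facts Hi.
have [h1 h2] := fromIdx_val Hk; rewrite h1 h2 /= in a b.
have [s' d' _ _] := Sm_facts Hk.
move: a b s d; rewrite /gx /gy; set l := toIdx _ => a b s d.
apply: idx_eq; lia.
Qed.
End Trans.

Section Geo.
Variable R : realFieldType.
Variables (Q1 Q2 Q3 Q4 : pt R) (m' : nat).
Local Notation m := m'.+1.
Local Notation N := m'.+2.
Local Notation comb := (comb Q1 Q2 Q3 Q4 m).
Local Notation vert := (vert Q1 Q2 Q3 Q4).
Implicit Types (k : idx m) (p : G N).

Definition gp (x y : nat) : pt R :=
  if (y <= x)%N then comb (m - x) (x - y) y 0 else comb (m - y) 0 x (y - x).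
Definition cxq (j : nat) : nat := (j == 1%N) || (j == 2%N).
Definition cyq (j : nat) : nat := (j == 2%N) || (j == 3%N).

Lemma vertE k i : k \in Sm m -> vert k i = gp (gx k + cxq (i %% 4)) (gy k + cyq (i %% 4)).
Proof.
move=> /Sm_facts [s d A1 A2]; rewrite /vert A1 A2 /gx /gy.
move: (ltn_pmod i (isT : (0 < 4)%N)); case: (i %% 4)%N => [|[|[|[|j]]]] // _;
  rewrite /gp /cxq /cyq /=; repeat case: ifP => ?; first [congr comb; lia | exfalso; lia].
Qed.

Lemma corner_idx (a b : nat) : (a <= 1)%N -> (b <= 1)%N -> exists i : 'I_4, cxq (i %% 4) = a /\ cyq (i %% 4) = b.
Proof.
case: a => [|[|a]] // _; case: b => [|[|b]] // _.
- by exists (@Ordinal 4 0 isT).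
- by exists (@Ordinal 4 3 isT).
- by exists (@Ordinal 4 1 isT).
- by exists (@Ordinal 4 2 isT).
Qed.

Lemma cv k l : k \in Sm m -> l \in Sm m -> adj8 (fromIdx k) (fromIdx l) -> common_vertex Q1 Q2 Q3 Q4 k l.
Proof.
move=> Hk Hl /and3P [_ n1 n2].
have [hk1 hk2] := fromIdx_val Hk; have [hl1 hl2] := fromIdx_val Hl.
move: n1 n2; rewrite /near hk1 hk2 hl1 hl2 => n1 n2.
have a1 : (gx l - gx k <= 1)%N by lia.
have a2 : (gy l - gy k <= 1)%N by lia.
have a3 : (gx k - gx l <= 1)%N by lia.
have a4 : (gy k - gy l <= 1)%N by lia.
have [i [i1 i2]] := corner_idx a1 a2.
have [j [j1 j2]] := corner_idx a3 a4.
apply/existsP; exists i; apply/existsP; exists j.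
rewrite !vertE // i1 i2 j1 j2; apply/eqP; congr gp; lia.
Qed.

Ltac fin := rewrite !vertE //= ?modnn ?modn_small // /cxq /cyq /=;
  apply/orP; right; apply/andP; split; apply/eqP; congr gp; lia.

Lemma cs k l : k \in Sm m -> l \in Sm m -> adj4 (fromIdx k) (fromIdx l) -> common_side Q1 Q2 Q3 Q4 k l.
Proof.
move=> Hk Hl /andP [/and3P [ne n1 n2] same].
have [hk1 hk2] := fromIdx_val Hk; have [hl1 hl2] := fromIdx_val Hl.
have ne' : (gx k != gx l) || (gy k != gy l).
  apply: contraNT ne; rewrite negb_or !negbK => /andP [/eqP a /eqP b].
  apply/eqP; apply: pair_val; rewrite ?hk1 ?hk2 ?hl1 ?hl2; lia.
move: n1 n2 same; rewrite /near hk1 hk2 hl1 hl2 => n1 n2 same.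
have : ((gx l = gx k + 1 /\ gy l = gy k) \/ (gx k = gx l + 1 /\ gy l = gy k)) \/
          ((gy l = gy k + 1 /\ gx l = gx k) \/ (gy k = gy l + 1 /\ gx l = gx k))%N by lia.
case=> [[[a b]|[a b]]|[[a b]|[a b]]].
- apply/existsP; exists (@Ordinal 4 1 isT); apply/existsP; exists (@Ordinal 4 3 isT); fin.
- apply/existsP; exists (@Ordinal 4 3 isT); apply/existsP; exists (@Ordinal 4 1 isT); fin.
- apply/existsP; exists (@Ordinal 4 2 isT); apply/existsP; exists (@Ordinal 4 0 isT); fin.
- apply/existsP; exists (@Ordinal 4 0 isT); apply/existsP; exists (@Ordinal 4 2 isT); fin.
Qed.

Local Open Scope ring_scope.

Lemma seg_comp (A B : pt R) s1 s2 t :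
  seg_pt (seg_pt A B s1) (seg_pt A B s2) t = seg_pt A B ((1 - t) * s1 + t * s2).
Proof. rewrite /seg_pt /padd /pscale /=; congr pair; ring. Qed.

Lemma onseg_of (A B P1 P2 : pt R) s1 s2 :
  0 <= s1 <= 1 -> 0 <= s2 <= 1 -> P1 = seg_pt A B s1 -> P2 = seg_pt A B s2 ->
  forall t, 0 <= t <= 1 -> on_seg (seg_pt P1 P2 t) A B.
Proof.
move=> /andP [a1 a2] /andP [b1 b2] -> -> t /andP [t1 t2].
exists ((1 - t) * s1 + t * s2); split; last exact: seg_comp.
apply/andP; split; nra.
Qed.

Lemma frac01 (x : nat) : (x <= m)%N -> 0 <= (x%:R / m%:R : R) <= 1.
Proof.
move=> H; apply/andP; split; first by rewrite divr_ge0 ?ler0n.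
by rewrite ler_pdivrMr ?ltr0Sn // mul1r ler_nat.
Qed.

Lemma mR0 : (m%:R : R) != 0. Proof. by rewrite pnatr_eq0. Qed.

Ltac combt := move=> H; rewrite /comb /seg_pt /padd /pscale /= ?natrB //;
  congr pair; field; by rewrite nat1r pnatr_eq0.

Lemma c12 (x : nat) : (x <= m)%N -> comb (m - x) x 0 0 = seg_pt Q1 Q2 (x%:R / m%:R).
Proof. combt. Qed.
Lemma c23 (y : nat) : (y <= m)%N -> comb 0 (m - y) y 0 = seg_pt Q2 Q3 (y%:R / m%:R).
Proof. combt. Qed.
Lemma c34 (x : nat) : (x <= m)%N -> comb 0 0 x (m - x) = seg_pt Q3 Q4 ((m - x)%:R / m%:R).
Proof. combt. Qed.
Lemma c41 (y : nat) : (y <= m)%N -> comb (m - y) 0 0 y = seg_pt Q4 Q1 ((m - y)%:R / m%:R).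
Proof. combt. Qed.

Lemma gpE1 (x : nat) : (x <= m)%N -> gp x 0 = comb (m - x) x 0 0.
Proof. by move=> H; rewrite /gp leq0n subn0. Qed.
Lemma gpE2 (y : nat) : (y <= m)%N -> gp m y = comb 0 (m - y) y 0.
Proof. by move=> H; rewrite /gp H subnn. Qed.
Lemma gpE3 (x : nat) : (x <= m)%N -> gp x m = comb 0 0 x (m - x).
Proof. move=> H; rewrite /gp; case: ifP => c; congr comb; lia. Qed.
Lemma gpE4 (y : nat) : (y <= m)%N -> gp 0 y = comb (m - y) 0 0 y.
Proof. move=> H; rewrite /gp; case: ifP => c; congr comb; lia. Qed.

Lemma bd k : k \in Sm m -> (gx k = 0 \/ gy k = 0 \/ gx k = m' \/ gy k = m')%N ->
  border Q1 Q2 Q3 Q4 k.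
Proof.
move=> Hk Hc; have [s _ _ _] := Sm_facts Hk.
have bx : (gx k <= m')%N by rewrite /gx; lia.
have by' : (gy k <= m')%N by rewrite /gy; lia.
case: Hc => [x0|[y0|[xm|ym]]].
- exists (@Ordinal 4 3 isT) => t Ht; apply: Or44.
  rewrite !vertE //= ?modnn ?modn_small // /cxq /cyq /= x0 /= !addn0 addn1 !gpE4; try lia.
  apply: (onseg_of (frac01 _) (frac01 _) (c41 _) (c41 _) Ht); lia.
- exists (@Ordinal 4 0 isT) => t Ht; apply: Or41.
  rewrite !vertE //= ?modnn ?modn_small // /cxq /cyq /= y0 /= !addn0 ?addn1 !gpE1; try lia.
  apply: (onseg_of (frac01 _) (frac01 _) (c12 _) (c12 _) Ht); lia.
- exists (@Ordinal 4 1 isT) => t Ht; apply: Or42.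
  rewrite !vertE //= ?modnn ?modn_small // /cxq /cyq /= xm /= !addn0 ?addn1 !gpE2; try lia.
  apply: (onseg_of (frac01 _) (frac01 _) (c23 _) (c23 _) Ht); lia.
- exists (@Ordinal 4 2 isT) => t Ht; apply: Or43.
  rewrite !vertE //= ?modnn ?modn_small // /cxq /cyq /= ym /= !addn0 ?addn1 !gpE3; try lia.
  apply: (onseg_of (frac01 _) (frac01 _) (c34 _) (c34 _) Ht); lia.
Qed.
End Geo.

Local Open Scope ring_scope.

Theorem proposition4p1 (R : realFieldType) (Q1 Q2 Q3 Q4 : pt R) (m : nat)
    (W : {set idx m}) :
  (2 <= m)%N ->
  convex_ccw_quad Q1 Q2 Q3 Q4 ->
  sqdist Q1 Q3 <= sqdist Q2 Q4 ->
  W \subset Sm m ->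
  is_tree W (adjW Q1 Q2 Q3 Q4 W) ->
  forall b, b \in Sm m :\: W ->
  exists2 c, c \in Sm m :\: W &
    border Q1 Q2 Q3 Q4 c /\ connect (adjB Q1 Q2 Q3 Q4 (Sm m :\: W)) b c.
Proof.
case: m W => [|m'] W // _ _ _ /subsetP WS [_ _ Tac] b.
rewrite in_setD => /andP [bW bS].
pose Wg : {set G m'.+2} := [set fromIdx x | x in W].
have Win : forall x, x \in Wg -> inner x.
  by move=> x /imsetP [w wW ->]; apply: fromIdx_inner; apply: WS.
have toW : forall x, x \in Wg -> toIdx x \in W.
  by move=> x /imsetP [w wW ->]; rewrite to_from //; apply: WS.
have notWg : forall x, inner x -> toIdx x \notin W -> x \notin Wg.
  move=> x xin; apply: contra => /imsetP [w wW Ex].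
  by rewrite Ex to_from //; apply: WS.
have Wg_not : forall x, inner x -> x \notin Wg -> toIdx x \notin W.
  move=> x xin; apply: contra => H; apply/imsetP; exists (toIdx x) => //.
  by rewrite from_to.
have inj : forall x y : G m'.+2, inner x -> inner y -> toIdx x = toIdx y -> x = y.
  move=> x y xi yi E; by rewrite -(from_to xi) -(from_to yi) E.
have Hac : acyc Wg.
  move=> s s2 su ss; apply/negP => Hc.
  have := Tac [seq toIdx x | x <- s]; rewrite size_map => /(_ s2).
  have -> : uniq [seq toIdx x | x <- s].
    rewrite map_inj_in_uniq // => x y /ss /Win xi /ss /Win yi; exact: inj.
  have sub : {subset [seq toIdx x | x <- s] <= W}.
    by move=> z /mapP [x /ss xs ->]; apply: toW.
  move=> /(_ isT) /(_ sub) /negP; apply; rewrite cycle_map; apply: sub_cycle Hc => x y.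
  case/and3P => xW yW H4; rewrite /= /adjW !toW //=.
  have xi := Win _ xW; have yi := Win _ yW.
  apply/andP; split.
    apply: contraTneq H4 => /(inj _ _ xi yi) ->; by rewrite /adj4 adj8_irr.
  apply: cs; rewrite ?from_to //; exact: toIdx_Sm.
have bg : fromIdx b \notin Wg by apply: notWg; rewrite ?to_from ?fromIdx_inner.
have [c cin Hc] := core (leqnn _) Win Hac bg.
have [c' [c1 c2 [f fin fc] c4]] := extract (fromIdx_inner bS) bg Hc cin.
exists (toIdx c').
  by rewrite in_setD Wg_not // toIdx_Sm.
split.
  have Hs := toIdx_Sm c1; apply: bd => //.
  have [h1 h2] := fromIdx_val Hs; rewrite from_to // in h1 h2.
  move: fc fin c1; rewrite /adj8 /near /inner h1 h2.
  have := ltn_ord f.1; have := ltn_ord f.2; lia.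
rewrite -(to_from bS).
move: c4 => /connectP [s Hs ->]; apply/connectP.
exists [seq toIdx x | x <- s]; last by rewrite last_map.
move: Hs; apply: homo_path => x y /and3P [xi yi /and3P [xW yW xy]].
rewrite /adjB !in_setD !Wg_not // !toIdx_Sm //=.
apply/andP; split.
  apply: contraTneq xy => /(inj _ _ xi yi) ->; by rewrite adj8_irr.
apply/orP; right; apply: cv; rewrite ?from_to //; exact: toIdx_Sm.
Qed.
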